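(* Consider the greedy algorithm (described in the context) run on a finite principal left ideal ring $R$ with a respectful order $<$, an ordered basis $B$ of $R^n$ and a left multiplicative property $P$ on $R^n$. Then each set $C_i$ ($0\le i\le n$) produced by the algorithm is a left $R$-submodule of $R^n$, and $P[x]$ is true for every nonzero $x\in C_i$.
   Context: $R$ is a finite principal left ideal ring with unit group $R^\ast$; codes are left submodules of $R^n$. A property $P:R^n\to\{\text{true},\text{false}\}$ is left multiplicative if $P[ux]=P[x]$ for all $u\in R^\ast$, $x\in R^n$. A total order $<$ on $R$ is respectful if for all nonzero $x,y\in R$ with $Rx\supsetneq Ry$ there is $\alpha\in R^\ast$ with $\alpha x<uy$ for all $u\in R^\ast$. Fix an ordered basis $B=(b_1,\dots,b_n)$ of the free left module $R^n$; put $V_0=\{0\}$ and $V_i=Rb_1+\dots+Rb_i$. The lexicographic order on $R^n$: if $x\in V_{i-1}$ and $y\in V_i\setminus V_{i-1}$ then $x<y$; if $x\ne y$ both lie in the level set $V_i\setminus V_{i-1}$, write $x=\sum_{j\le i}x_jb_j$, $y=\sum_{j\le i}y_jb_j$, let $k$ be the largest index with $x_k\ne y_k$, and set $x<y$ iff $x_k<y_k$ in $R$. Fix a set $\Gamma\subseteq R$ containing one generator of each nonzero left ideal of $R$. Greedy algorithm: $C_0=\{0\}$; for $i=1,\dots,n$, let $a_i$ be the smallest vector of $V_i\setminus V_{i-1}$ (if any) such that $P[\gamma a_i+c]$ is true for all $\gamma\in\Gamma$ and all $c\in C_{i-1}$; if such $a_i$ exists set $C_i=Ra_i+C_{i-1}$,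 otherwise $C_i=C_{i-1}$. The output $C_n$ is the lexicode $C(<,B,P)$. *)

(* Defs.v *)
From HB Require Import structures.
From mathcomp Require Import all_boot all_order all_algebra.
Set Implicit Arguments. Unset Strict Implicit. Unset Printing Implicit Defensive.
Import GRing.Theory.
Local Open Scope ring_scope.

Section Lexicodes.
Variable R : finUnitRingType.

Definition lideal (I : {set R}) : Prop :=
  [/\ 0 \in I, (forall x y, x \in I -> y \in I -> x + y \in I)
    & (forall r x, x \in I -> r * x \in I)].

Definition lprinc (x : R) : {set R} := [set r * x | r in [set: R]].

Definition PLIR : Prop := forall I, lideal I -> exists g : R, I = lprinc g.

Definition strict_total (lt : rel R) : Prop :=
  [/\ (forall x, ~~ lt x x), (forall x y z, lt x y -> lt y z -> lt x z)
    & (forall x y, x != y -> lt x y || lt y x)].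

Definition respectful (lt : rel R) : Prop :=
  forall x y : R, x != 0 -> y != 0 -> lprinc y \proper lprinc x ->
    exists2 alpha, alpha \is a GRing.unit &
      forall u, u \is a GRing.unit -> lt (alpha * x) (u * y).

Variable n : nat.
Notation vec := 'rV[R]_n.

Definition lsubmod (C : {set vec}) : Prop :=
  [/\ 0 \in C, (forall x y, x \in C -> y \in C -> x + y \in C)
    & (forall (r : R) x, x \in C -> r *: x \in C)].

Definition left_mult (P : vec -> bool) : Prop :=
  forall u x, u \is a GRing.unit -> P (u *: x) = P x.

(* b (indices 0..n-1 standing for b_1..b_n) is a basis of the free module R^n. *)
Definition is_basis (b : 'I_n -> vec) : Prop :=
  forall x : vec, exists! c : {ffun 'I_n -> R}, x = \sum_j c j *: b j.

Variable b : 'I_n -> vec.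

(* x lies in V_i = R b_1 + ... + R b_i (0-based: span of b j with j < i). *)
Definition inV (i : nat) (x : vec) : bool :=
  [exists c : {ffun 'I_n -> R},
     (x == \sum_j c j *: b j) && [forall j : 'I_n, (i <= j)%N ==> (c j == 0)]].

Variable lt : rel R.

Definition lexlt (x y : vec) : bool :=
  (* x in V_{i-1}, y in V_i \ V_{i-1} *)
  [exists i : 'I_n.+1, inV i x && ~~ inV i y]
  ||
  (* same level set, compare at the largest differing coordinate *)
  ([exists i : 'I_n.+1, [&& (0 < i)%N, inV i x, ~~ inV i.-1 x, inV i y & ~~ inV i.-1 y]]
   && (x != y) &&
   [exists cx : {ffun 'I_n -> R}, exists cy : {ffun 'I_n -> R},
     [&& x == \sum_j cx j *: b j, y == \sum_j cy j *: b j &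
      [exists k : 'I_n, lt (cx k) (cy k) &&
         [forall j : 'I_n, (k < j)%N ==> (cx j == cy j)]]]]).

Variable P : vec -> bool.
Variable Gamma : {set R}.

Fixpoint greedy (i : nat) : {set vec} :=
  match i with
  | O => [set 0]
  | i'.+1 =>
      let Cp := greedy i' in
      let S := [set a | [&& inV i'.+1 a, ~~ inV i' a &
                  [forall g in Gamma, [forall c in Cp, P (g *: a + c)]]]] in
      match [pick a in S | [forall y in S, (y != a) ==> lexlt a y]] with
      | Some a => [set r *: a + c | r in [set: R], c in Cp]
      | None => Cp
      end
  end.

End Lexicodes.

(* Main.v *)
Require Import Defs.
From HB Require Import structures.
From mathcomp Require Import all_boot all_order all_algebra.
From mathcomp Require Import zify.
Set Implicit Arguments. Unset Strict Implicit. Unset Printing Implicit Defensive.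
Import GRing.Theory.
Local Open Scope ring_scope.

Section RingLemma.
Variable R : finUnitRingType.

Definition ann (m : R) : {set R} := [set r | r * m == 0].
Definition Aset (J M : {set R}) := [set m in M | J \subset ann m].
Definition Nset (K M : {set R}) := [set m in M | ann m == K].

Lemma A_sum J M : #|Aset J M| = (\sum_(K : {set R} | J \subset K) #|Nset K M|)%N.
Proof.
rewrite -sum1_card (partition_big ann (fun K => J \subset K)); last first.
  by move=> m; rewrite inE => /andP[].
apply: eq_bigr => K JK; rewrite -sum1_card; apply: eq_bigl => m.
rewrite !inE; case: (m \in M) => //=; case: (ann m =P K) => [->|_]; by rewrite ?JK ?andbF ?andbT.
Qed.

Lemma N_eq M1 M2 : (forall J, #|Aset J M1| = #|Aset J M2|) ->
  forall K, #|Nset K M1| = #|Nset K M2|.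
Proof.
move=> HA K.
have [n] := ubnP (#|R| - #|K|)%N; elim: n K => // n IH K Hn.
have E := HA K; rewrite !A_sum in E.
rewrite (bigD1 K) //= [RHS](bigD1 K) //= in E.
move/eqP: E; rewrite (eq_bigr (fun K' => #|Nset K' M2|)) ?eqn_add2r; first by move/eqP.
move=> K' /andP[KK' K'K].
have Kp : K \proper K' by rewrite properEneq eq_sym K'K.
apply: IH; have := proper_card Kp; have := max_card K'; have := max_card K.
move=> h1 h2 h3; move: Hn; move: h1 h2 h3; move: #|R| #|K| #|K'| => a b c; lia.
Qed.

Definition Rid (e : R) : {set R} := [set m | m * e == m].

Lemma A_prod J (e : R) : e * e = e ->
  #|Aset J setT| = (#|Aset J (Rid e)| * #|Aset J (Rid (1 - e)%R)|)%N.
Proof.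
move=> ee.
have ff : (1 - e) * (1 - e) = 1 - e.
  by rewrite mulrBl mul1r mulrBr mulr1 ee subrr subr0.
have ef : e * (1 - e) = 0 by rewrite mulrBr mulr1 ee subrr.
have fe : (1 - e) * e = 0 by rewrite mulrBl mul1r ee subrr.
rewrite -cardsX -(@card_in_imset _ _ (fun pq : R * R => pq.1 + pq.2)).
  apply: eq_card => m; rewrite !inE; apply/idP/imsetP.
    move=> Jm; exists (m * e, m * (1 - e)); last by rewrite /= -mulrDr addrC subrK mulr1.
    rewrite !inE -!mulrA ee ff !eqxx /=; apply/andP; split; apply/subsetP => j jJ;
    move/subsetP: Jm => /(_ j jJ); rewrite !inE => /eqP h; by rewrite mulrA h mul0r.
  case=> [[p q]]; rewrite !inE /= => /andP[/andP[/eqP pe Jp] /andP[/eqP qf Jq]] ->.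
  apply/subsetP => j jJ; rewrite inE mulrDr.
  move/subsetP: Jp => /(_ j jJ); rewrite inE => /eqP ->.
  by move/subsetP: Jq => /(_ j jJ); rewrite inE => /eqP ->; rewrite addr0.
move=> [p q] [p' q']; rewrite !inE /= => /andP[/andP[/eqP pe _] /andP[/eqP qf _]].
move=> /andP[/andP[/eqP pe' _] /andP[/eqP qf' _]] h.
have hp : p = p'.
  have := congr1 (fun z => z * e) h; rewrite /= !mulrDl.
  by rewrite -qf -qf' -!mulrA fe !mulr0 !addr0 pe pe'.
by move: h; rewrite hp => /addrI ->.
Qed.

Lemma A_le J (M1 M2 : {set R}) (g h : R) : (forall v, v \in M1 -> v * g \in M2) ->
  (forall v, v \in M1 -> v * g * h = v) -> (#|Aset J M1| <= #|Aset J M2|)%N.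
Proof.
move=> HM Hinv.
rewrite -(@card_in_imset _ _ (fun v => v * g)); last first.
  move=> v w; rewrite !inE => /andP[vM _] /andP[wM _] E.
  by rewrite -(Hinv v vM) -(Hinv w wM) E.
apply: subset_leq_card; apply/subsetP => m /imsetP[v]; rewrite !inE => /andP[vM Jv] ->.
rewrite HM //=; apply/subsetP => j jJ; move/subsetP: Jv => /(_ j jJ).
by rewrite !inE mulrA => /eqP ->; rewrite mul0r.
Qed.


Lemma left_inv (u : R) : (forall z, z * u = 0 -> z = 0) -> exists v, v * u = 1.
Proof.
move=> H.
have inj : injective (fun z => z * u).
  by move=> z1 z2 E; apply/eqP; rewrite -subr_eq0; apply/eqP/H; rewrite mulrBl E subrr.
have hc : #|[set z * u | z in [set: R]]| = #|[set: R]|.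
  by rewrite card_imset.
move/subset_cardP: hc => /(_ (subsetT _)) hc.
have : (1 : R) \in [set z * u | z in [set: R]] by rewrite hc inE.
by case/imsetP => v _ ->; exists v.
Qed.

Lemma unit_of (u : R) : (forall z, z * u = 0 -> z = 0) -> u \is a GRing.unit.
Proof.
move=> H; have [v vu] := left_inv H.
have [w wv] : exists w, w * v = 1.
  apply: left_inv => z zv; by rewrite -[z]mulr1 -vu mulrA zv mul0r.
have wu : w = u by rewrite -[w]mulr1 -vu mulrA wv mul1r.
by apply/unitrP; exists v; rewrite -{2}wu wv.
Qed.

Lemma fitting (c : R) : exists i p, (0 < p)%N /\ forall n, (i <= n)%N -> c ^+ (n + p) = c ^+ n.
Proof.
have : ~~ injectiveb (fun k : 'I_#|R|.+1 => c ^+ k).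
  apply/injectiveP => inj; have := @leq_card _ _ _ inj; rewrite [X in (X <= _)%N]card_ord ltnn.
  by [].
case/injectivePn => i [j] ij E.
have ij' : (val i != val j) by [].
have E' : c ^+ (val i) = c ^+ (val j) by [].
move: (val i) (val j) E' ij' => i' j' {E ij} E ij.
clear i j; rename i' into i; rename j' into j.
wlog lij : i j ij E / (i < j)%N.
  move=> W; case: (ltngtP i j) => h; first exact: W h.
    by apply: (W j i) => //; rewrite eq_sym.
  by rewrite h eqxx in ij.
exists i, (j - i)%N; split; first by rewrite subn_gt0.
move=> n inn.
have -> : (n + (j - i) = (n - i) + j)%N by lia.
have -> : c ^+ n = c ^+ (n - i + i)%N by rewrite subnK.
by rewrite !exprD E.
Qed.

Lemma period (c : R) i p : (forall n, (i <= n)%N -> c ^+ (n + p) = c ^+ n) ->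
  forall q n, (i <= n)%N -> c ^+ (n + p * q) = c ^+ n.
Proof.
move=> H; elim=> [|q IH] n inn; first by rewrite muln0 addn0.
rewrite mulnS addnCA addnC H ?IH //; exact: (leq_trans inn (leq_addr _ _)).
Qed.


Lemma comm_pow (t a b : R) : t * a = b * t -> forall n, t * a ^+ n = b ^+ n * t.
Proof.
move=> H; elim=> [|n IH]; first by rewrite !expr0 mulr1 mul1r.
by rewrite !exprS mulrA H -mulrA IH mulrA.
Qed.

Lemma assoc (x y s t : R) : x = s * y -> y = t * x ->
  exists2 u, u \is a GRing.unit & u * x = y.
Proof.
move=> xsy ytx.
pose a := s * t; pose b := t * s.
have ax : a * x = x by rewrite /a -mulrA -ytx -xsy.
have ta : t * a = b * t by rewrite /a /b !mulrA.
have sb : s * b = a * s by rewrite /a /b !mulrA.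
have [ia [pa [pa0 Ha]]] := fitting a.
have [ib [pb [pb0 Hb]]] := fitting b.
have [X [hX1 hX2]] : exists X, (ia <= X)%N /\ (ib <= X)%N.
  by exists (maxn ia ib); rewrite leq_maxl leq_maxr.
pose m := (pa * pb * X.+1)%N.
have mge : (X.+1 <= m)%N by rewrite /m leq_pmull // muln_gt0 pa0 pb0.
have am : a ^+ (m + m) = a ^+ m.
  rewrite {2}/m -mulnA (period Ha) //; move: mge hX1; clearbody m; lia.
have bm : b ^+ (m + m) = b ^+ m.
  rewrite {2}/m (mulnC pa) -mulnA (period Hb) //; move: mge hX2; clearbody m; lia.
clearbody m.
have m0 : (0 < m)%N by lia.
pose e := a ^+ m; pose e' := b ^+ m.
have ee : e * e = e by rewrite /e -exprD am.
have e'e' : e' * e' = e' by rewrite /e' -exprD bm.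
have te : t * e = e' * t by rewrite /e /e' (comm_pow ta).
have se' : s * e' = e * s by rewrite /e /e' (comm_pow sb).
have ex : e * x = x.
  rewrite /e; elim: (m) => [|k IH]; first by rewrite expr0 mul1r.
  by rewrite exprSr -mulrA ax.
have fx : (1 - e) * x = 0 by rewrite mulrBl mul1r ex subrr.
have am1 : a * a ^+ m.-1 = e by rewrite /e -exprS prednK.
have bm1 : b * b ^+ m.-1 = e' by rewrite /e' -exprS prednK.
have HA : forall J, #|Aset J (Rid (1 - e))| = #|Aset J (Rid (1 - e'))|.
  move=> J.
  have E1 := A_prod J ee; have E2 := A_prod J e'e'.
  have L1 : #|Aset J (Rid e)| = #|Aset J (Rid e')|.
    apply/eqP; rewrite eqn_leq; apply/andP; split.
      apply: (@A_le _ _ _ (s * e') (t * a ^+ m.-1)).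
        by move=> v; rewrite !inE => /eqP vE; rewrite -!mulrA e'e'.
      move=> v; rewrite inE => /eqP vE.
      by rewrite se' -!mulrA (mulrA s) -/a am1 ee vE.
    apply: (@A_le _ _ _ (t * e) (s * b ^+ m.-1)).
      by move=> v; rewrite !inE => /eqP vE; rewrite -!mulrA ee.
    move=> v; rewrite inE => /eqP vE.
    by rewrite te -!mulrA (mulrA t) -/b bm1 e'e' vE.
  have P0 : (0 < #|Aset J (Rid e)|)%N.
    apply/card_gt0P; exists 0; rewrite !inE mul0r eqxx /=.
    by apply/subsetP => j _; rewrite inE mulr0.
  apply/eqP; rewrite -(eqn_pmul2l P0); apply/eqP.
  by rewrite -E1 L1 -E2.
have HN := N_eq HA (ann (1 - e')).
have : (0 < #|Nset (ann (1 - e')%R) (Rid (1 - e)%R)|)%N.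
  rewrite HN; apply/card_gt0P; exists (1 - e')%R; rewrite !inE eqxx andbT.
  by rewrite mulrBl mul1r mulrBr mulr1 e'e' subrr subr0.
case/card_gt0P => m'; rewrite !inE => /andP[/eqP m'f /eqP m'ann].
exists (t * e + m'); last first.
  by rewrite mulrDl -mulrA ex -ytx -m'f -mulrA fx mulr0 addr0.
apply: unit_of => z zu.
have m'e : m' * e = 0 by rewrite -m'f -mulrA mulrBl mul1r ee subrr mulr0.
have zte : z * (t * e) = 0.
  by have := congr1 (fun w => w * e) zu; rewrite /= mul0r mulrDr mulrDl -!mulrA ee m'e mulr0 addr0.
have ze' : z * e' = 0.
  have := congr1 (fun w => w * (s * b ^+ m.-1)) zte.
  by rewrite mul0r te -!mulrA (mulrA t) -/b bm1 e'e'.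
have zm' : z * m' = 0.
  by move: zu; rewrite mulrDr zte add0r.
have : z \in ann m' by rewrite inE zm'.
rewrite m'ann inE => /eqP zf.
have -> : z = z * (1 - e') + z * e' by rewrite -mulrDr subrK mulr1.
by rewrite zf ze' addr0.
Qed.

End RingLemma.

Lemma lprinc_lideal (R : finUnitRingType) (r : R) : lideal (lprinc r).
Proof.
split.
- by apply/imsetP; exists 0; rewrite ?inE ?mul0r.
- move=> x y /imsetP[p _ ->] /imsetP[q _ ->]; apply/imsetP; exists (p + q);
  by rewrite ?inE ?mulrDl.
- move=> p x /imsetP[q _ ->]; apply/imsetP; exists (p * q); by rewrite ?inE ?mulrA.
Qed.

Theorem mainTheorem6 (R : finUnitRingType) (HR : PLIR R)
  (lt : rel R) (Hlt : strict_total lt) (Hresp : respectful lt)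
  (n : nat) (b : 'I_n -> 'rV[R]_n) (Hb : is_basis b)
  (P : 'rV[R]_n -> bool) (HP : left_mult P)
  (Gamma : {set R})
  (HG0 : 0 \notin Gamma)
  (HG : forall I : {set R}, lideal I -> I != [set 0] ->
          exists! g : R, g \in Gamma /\ I = lprinc g)
  (i : nat) (Hi : (i <= n)%N) :
  lsubmod (greedy b lt P Gamma i) /\
  (forall x, x \in greedy b lt P Gamma i -> x != 0 -> P x).
Proof.
clear Hi; elim: i => [|i [[C0 CD CZ] CP]].
  split; first split.
  - by rewrite /= inE.
  - by move=> x y; rewrite /= !inE => /eqP -> /eqP ->; rewrite addr0.
  - by move=> r x; rewrite /= !inE => /eqP ->; rewrite scaler0.
  by move=> x; rewrite /= inE => ->.
rewrite [greedy _ _ _ _ i.+1]/=.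
case: pickP => [a /andP[aS _]|_]; last by split.
move: aS; rewrite inE => /and3P[_ _ /forallP Hall].
split; first split.
- by apply/imset2P; exists 0 0; rewrite ?inE ?scale0r ?addr0.
- move=> x y /imset2P[r1 c1 _ c1C ->] /imset2P[r2 c2 _ c2C ->].
  apply/imset2P; exists (r1 + r2) (c1 + c2); rewrite ?inE ?CD //.
  by rewrite scalerDl addrACA.
- move=> r x /imset2P[r1 c1 _ c1C ->].
  apply/imset2P; exists (r * r1) (r *: c1); rewrite ?inE ?CZ //.
  by rewrite scalerDr scalerA.
move=> x /imset2P[r c _ cC ->] x0.
have [r0|rn0] := eqVneq r 0.
  by apply: CP => //; move: x0; rewrite r0 scale0r add0r.
have Ine : lprinc r != [set 0].
  apply/negP => /eqP E; have : r \in lprinc r by apply/imsetP; exists 1; rewrite ?inE ?mul1r.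
  by rewrite E inE (negbTE rn0).
have [g [[gG Eg] _]] := HG _ (lprinc_lideal r) Ine.
have : r \in lprinc g by rewrite -Eg; apply/imsetP; exists 1; rewrite ?inE ?mul1r.
case/imsetP => s _ rsg.
have : g \in lprinc r by rewrite Eg; apply/imsetP; exists 1; rewrite ?inE ?mul1r.
case/imsetP => t _ gtr.
have [u uU ug] := assoc gtr rsg.
have -> : r *: a + c = u *: (g *: a + u^-1 *: c).
  by rewrite scalerDr !scalerA ug mulrV // scale1r.
rewrite HP //.
have := Hall g; rewrite gG /= => /forallP /(_ (u^-1 *: c)).
by rewrite CZ.
Qed.
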